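(* Let $H$ and $K$ be separable Hilbert spaces, let $I,J\subseteq\mathbb{Z}$, let $\{H_i\}_{i\in I}$ and $\{K_j\}_{j\in J}$ be families of Hilbert spaces, let $\{V_i\}_{i\in I}$ be closed subspaces of $H$ and $\{W_j\}_{j\in J}$ closed subspaces of $K$, let $\Lambda_i\in\mathcal{B}(H,H_i)$, $\Gamma_j\in\mathcal{B}(K,K_j)$, and let $v_i>0$, $w_j>0$ be weights. Then $\Lambda=\{(V_i,\Lambda_i,v_i)\}_{i\in I}$ and $\Gamma=\{(W_j,\Gamma_j,w_j)\}_{j\in J}$ are g-fusion frames for $H$ and $K$ with respect to $\{H_i\}_{i\in I}$ and $\{K_j\}_{j\in J}$, respectively, if and only if the family $\Lambda\otimes\Gamma=\{(V_i\otimes W_j,\ \Lambda_i\otimes\Gamma_j,\ v_iw_j)\}_{i,j}$ is a g-fusion frame for $H\otimes K$ with respect to $\{H_i\otimes K_j\}_{i,j}$.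
   Context: For a closed subspace $V$, $P_V$ denotes the orthogonal projection onto $V$. $H\otimes K$ is the Hilbert space tensor product, with $\langle f\otimes g,f'\otimes g'\rangle=\langle f,f'\rangle\langle g,g'\rangle$ and $\|f\otimes g\|=\|f\|\,\|g\|$. For bounded operators $Q:H\to H'$, $T:K\to K'$, $Q\otimes T:H\otimes K\to H'\otimes K'$ is the bounded operator with $(Q\otimes T)(f\otimes g)=Qf\otimes Tg$. For closed subspaces $V\subseteq H$, $W\subseteq K$, $V\otimes W$ is the corresponding closed subspace of $H\otimes K$, and $P_{V\otimes W}=P_V\otimes P_W$. A family $\{(V_i,\Lambda_i,v_i)\}_{i\in I}$ (with $V_i\subseteq H$ closed, $\Lambda_i\in\mathcal{B}(H,H_i)$, $v_i>0$) is a g-fusion frame for $H$ with respect to $\{H_i\}$ if there are constants $0<A\le B<\infty$ with $A\|f\|^2\le\sum_{i\in I}v_i^2\|\Lambda_iP_{V_i}f\|^2\le B\|f\|^2$ for all $f\in H$. The family $\Lambda\otimes\Gamma$ is called a g-fusion frame for $H\otimes K$ with respect to $\{H_i\otimes K_j\}_{i,j}$ if there exist constants $0<A\le B<\infty$ such that for all $f\in H$, $g\in K$: $A\|f\otimes g\|^2\le\sum_{i,j}v_i^2w_j^2\|(\Lambda_i\otimes\Gamma_j)P_{V_i\otimes W_j}(f\otimes g)\|^2\le B\|f\otimes g\|^2$ (the inequalities are required on elementary tensors $f\otimes g$). *)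

(* Defs.v *)
From HB Require Import structures.
From mathcomp Require Import all_boot all_order all_algebra.
From mathcomp Require Import complex.
From mathcomp Require Import classical_sets reals constructive_ereal ereal esum.
From Stdlib Require Import ClassicalEpsilon.

Set Implicit Arguments.
Unset Strict Implicit.
Unset Printing Implicit Defensive.

Import Order.TTheory GRing.Theory Num.Theory.
Local Open Scope ring_scope.
Local Open Scope classical_set_scope.

Record Hilb (R : realType) := Hilb_of {
  hcar :> lmodType (R[i]);
  hinner : hcar -> hcar -> R[i];
  hinner_linl : forall (a : R[i]) (x y z : hcar),
      hinner (a *: x + y) z = a * hinner x z + hinner y z;
  hinner_conj : forall x y : hcar, hinner y x = conjc (hinner x y);
  hinner_ge0 : forall x : hcar, 0 <= hinner x x;
  hinner_eq0 : forall x : hcar, hinner x x = 0 -> x = 0;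
  hinner_complete : forall u : nat -> hcar,
      (forall e : R, 0 < e -> exists N : nat, forall m n : nat,
          (N <= m)%N -> (N <= n)%N ->
          Num.sqrt (complex.Re (hinner (u m - u n) (u m - u n))) < e) ->
      exists l : hcar, forall e : R, 0 < e -> exists N : nat, forall n : nat,
          (N <= n)%N -> Num.sqrt (complex.Re (hinner (u n - l) (u n - l))) < e
}.

Section HilbertDefs.
Variable R : realType.

Definition hnorm (H : Hilb R) (x : H) : R :=
  Num.sqrt (complex.Re (hinner x x)).

Definition separable (H : Hilb R) : Prop :=
  exists d : nat -> H, forall (x : H) (e : R), 0 < e ->
    exists n : nat, hnorm (x - d n) < e.

Definition closed_subspace (H : Hilb R) (V : set H) : Prop :=
  [/\ V 0,
      (forall (a : R[i]) (x y : H), V x -> V y -> V (a *: x + y)) &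
      (forall (u : nat -> H) (l : H), (forall n, V (u n)) ->
         (forall e : R, 0 < e -> exists N : nat, forall n : nat,
            (N <= n)%N -> hnorm (u n - l) < e) -> V l)].

(* orthogonal projection onto V : the (unique, for closed V) p in V with
   x - p orthogonal to V *)
Definition orthproj (H : Hilb R) (V : set H) (x : H) : H :=
  epsilon (inhabits (0 : H))
    (fun p : H => V p /\ forall v : H, V v -> hinner (x - p) v = 0).

Definition bounded_op (H H' : Hilb R) (L : H -> H') : Prop :=
  exists M : R, forall x : H, hnorm (L x) <= M * hnorm x.

Definition gfusion_frame (H : Hilb R) (I : set int) (Hi : int -> Hilb R)
    (V : int -> set H) (Lam : forall i, {linear H -> Hi i}) (v : int -> R)
    : Prop :=
  exists A B : R, [/\ 0 < A, A <= B &
    forall f : H,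
      ((A * hnorm f ^+ 2)%:E <=
         \esum_(i in I) ((v i) ^+ 2 * hnorm (Lam i (orthproj (V i) f)) ^+ 2)%:E)%E
      /\
      (\esum_(i in I) ((v i) ^+ 2 * hnorm (Lam i (orthproj (V i) f)) ^+ 2)%:E
         <= (B * hnorm f ^+ 2)%:E)%E].

(* Hilbert tensor products, given abstractly by their universal data:  *)
(* HK together with t : H -> K -> HK (t f g = f (x) g) such that       *)
(* <f(x)g, f'(x)g'> = <f,f'><g,g'> and the span of the elementary      *)
(* tensors is dense in HK.  (This determines HK up to unitary iso.)    *)
Definition is_tensor (H K HK : Hilb R) (t : H -> K -> HK) : Prop :=
  (forall (f f' : H) (g g' : K),
      hinner (t f g) (t f' g') = hinner f f' * hinner g g') /\
  (forall (x : HK) (e : R), 0 < e ->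
     exists s : seq (H * K),
       hnorm (x - \sum_(p <- s) t p.1 p.2) < e).

Definition tensor_subspace (H K HK : Hilb R) (t : H -> K -> HK)
    (V : set H) (W : set K) : set HK :=
  [set x : HK | forall e : R, 0 < e ->
     exists s : seq (H * K),
       (forall p, p \in s -> V p.1 /\ W p.2) /\
       hnorm (x - \sum_(p <- s) t p.1 p.2) < e].

Definition is_tensor_op (H K HK H' K' HK' : Hilb R)
    (t : H -> K -> HK) (t' : H' -> K' -> HK')
    (Q : H -> H') (T : K -> K') (QT : {linear HK -> HK'}) : Prop :=
  bounded_op QT /\ forall (f : H) (g : K), QT (t f g) = t' (Q f) (T g).

(* Lam (x) Gam is a g-fusion frame for H (x) K w.r.t. {H_i (x) K_j}
   (inequalities required on elementary tensors f (x) g) *)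
Definition tensor_gfusion_frame (H K HK : Hilb R) (t : H -> K -> HK)
    (I J : set int) (HKij : int -> int -> Hilb R)
    (V : int -> set H) (W : int -> set K)
    (LG : forall i j, {linear HK -> HKij i j}) (v w : int -> R) : Prop :=
  exists A B : R, [/\ 0 < A, A <= B &
    forall (f : H) (g : K),
      ((A * hnorm (t f g) ^+ 2)%:E <=
         \esum_(ij in I `*` J)
           ((v ij.1 * w ij.2) ^+ 2 *
            hnorm (LG ij.1 ij.2
                     (orthproj (tensor_subspace t (V ij.1) (W ij.2)) (t f g)))
              ^+ 2)%:E)%E
      /\
      (\esum_(ij in I `*` J)
           ((v ij.1 * w ij.2) ^+ 2 *
            hnorm (LG ij.1 ij.2
                     (orthproj (tensor_subspace t (V ij.1) (W ij.2)) (t f g)))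
              ^+ 2)%:E
         <= (B * hnorm (t f g) ^+ 2)%:E)%E].

End HilbertDefs.

(* Main.v *)
Require Import Defs.
From HB Require Import structures.
From mathcomp Require Import all_boot all_order all_algebra.
From mathcomp Require Import complex.
From mathcomp Require Import classical_sets reals constructive_ereal ereal esum.
From mathcomp Require Import boolp cardinality fsbigop.
From mathcomp Require Import ring lra.
From Stdlib Require Import ClassicalEpsilon.

Set Implicit Arguments.
Unset Strict Implicit.
Unset Printing Implicit Defensive.
Import Order.TTheory GRing.Theory Num.Theory.
Local Open Scope ring_scope.
Local Open Scope classical_set_scope.
Local Open Scope complex_scope.
Section Hil.
Variable R : realType.
Variable H : Hilb R.
Implicit Types x y z : H.

Lemma ceta (c : R[i]) : c = Complex (complex.Re c) (complex.Im c).
Proof. by case: c. Qed.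

Lemma conjcD (a b : R[i]) : conjc (a + b) = conjc a + conjc b.
Proof. by case: a => a1 a2; case: b => b1 b2 /=; rewrite opprD. Qed.
Lemma conjcM (a b : R[i]) : conjc (a * b) = conjc a * conjc b.
Proof. by case: a => a1 a2; case: b => b1 b2 /=; congr Complex; ring. Qed.
Lemma conjcN (a : R[i]) : conjc (- a) = - conjc a.
Proof. by case: a. Qed.
Lemma conjcKK (a : R[i]) : conjc (conjc a) = a.
Proof. by case: a => a1 a2 /=; rewrite opprK. Qed.

Lemma ip0l z : hinner (0 : H) z = 0.
Proof.
have E := hinner_linl 1 (0:H) 0 z; rewrite scale1r addr0 mul1r in E.
by rewrite -[LHS](addrK (hinner (0:H) z)) -E subrr.
Qed.

Lemma ip_addl x y z : hinner (x + y) z = hinner x z + hinner y z.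
Proof. by have := hinner_linl 1 x y z; rewrite scale1r mul1r. Qed.

Lemma ip_scalel a x z : hinner (a *: x) z = a * hinner x z.
Proof. by have := hinner_linl a x 0 z; rewrite addr0 ip0l addr0. Qed.

Lemma ip_oppl x z : hinner (- x) z = - hinner x z.
Proof. by rewrite -scaleN1r ip_scalel mulN1r. Qed.

Lemma ip_subl x y z : hinner (x - y) z = hinner x z - hinner y z.
Proof. by rewrite ip_addl ip_oppl. Qed.

Lemma ip_addr x y z : hinner z (x + y) = hinner z x + hinner z y.
Proof. by rewrite hinner_conj ip_addl conjcD -!hinner_conj. Qed.

Lemma ip_scaler a x z : hinner z (a *: x) = conjc a * hinner z x.
Proof. by rewrite hinner_conj ip_scalel conjcM -hinner_conj. Qed.

Lemma ip0r z : hinner z (0 : H) = 0.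
Proof. by rewrite hinner_conj ip0l /= oppr0. Qed.

Lemma ip_oppr x z : hinner z (- x) = - hinner z x.
Proof. by rewrite -scaleN1r ip_scaler conjcN /= oppr0 mulN1r. Qed.

Lemma ip_subr x y z : hinner z (x - y) = hinner z x - hinner z y.
Proof. by rewrite ip_addr ip_oppr. Qed.

Definition rp x y := complex.Re (hinner x y).
Definition NN x := rp x x.

Lemma ReD (a b : R[i]) : complex.Re (a + b) = complex.Re a + complex.Re b.
Proof. by case: a; case: b. Qed.
Lemma ReN (a : R[i]) : complex.Re (- a) = - complex.Re a.
Proof. by case: a. Qed.
Lemma ReJ (a : R[i]) : complex.Re (conjc a) = complex.Re a.
Proof. by case: a. Qed.

Lemma Im_ip_xx x : complex.Im (hinner x x) = 0.
Proof. by have := hinner_ge0 x; rewrite lecE => /andP[/eqP ->]. Qed.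

Lemma NN_ge0 x : 0 <= NN x.
Proof. by have := hinner_ge0 x; rewrite lecE => /andP[_]. Qed.

Lemma ip_xx x : hinner x x = (NN x)%:C.
Proof. by rewrite [LHS]ceta Im_ip_xx. Qed.

Lemma NN_eq0 x : NN x = 0 -> x = 0.
Proof. by move=> E; apply: hinner_eq0; rewrite ip_xx E. Qed.

Lemma hnormE x : hnorm x = Num.sqrt (NN x).
Proof. by []. Qed.

Lemma hnorm_sq x : hnorm x ^+ 2 = NN x.
Proof. by rewrite hnormE sqr_sqrtr // NN_ge0. Qed.

Lemma hnorm_ge0 x : 0 <= hnorm x.
Proof. exact: sqrtr_ge0. Qed.

Lemma hnorm0 : hnorm (0 : H) = 0.
Proof. by rewrite hnormE /NN /rp ip0l sqrtr0. Qed.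

Lemma rp_sym x y : rp x y = rp y x.
Proof. by rewrite /rp hinner_conj ReJ. Qed.

Lemma rp_addl x y z : rp (x + y) z = rp x z + rp y z.
Proof. by rewrite /rp ip_addl ReD. Qed.
Lemma rp_addr x y z : rp z (x + y) = rp z x + rp z y.
Proof. by rewrite /rp ip_addr ReD. Qed.
Lemma rp_oppl x z : rp (- x) z = - rp x z.
Proof. by rewrite /rp ip_oppl ReN. Qed.
Lemma rp_oppr x z : rp z (- x) = - rp z x.
Proof. by rewrite /rp ip_oppr ReN. Qed.
Lemma rp0r z : rp z 0 = 0.
Proof. by rewrite /rp ip0r. Qed.

Lemma rp_scalel (r : R) x z : rp (r%:C *: x) z = r * rp x z.
Proof. by rewrite /rp ip_scalel; case: (hinner x z) => a b /=; rewrite mul0r subr0. Qed.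
Lemma rp_scaler (r : R) x z : rp z (r%:C *: x) = r * rp z x.
Proof. by rewrite rp_sym rp_scalel rp_sym. Qed.

Lemma NN_add x y : NN (x + y) = NN x + NN y + 2 * rp x y.
Proof. rewrite /NN rp_addl !rp_addr (rp_sym y x); ring. Qed.

Lemma NN_sub x y : NN (x - y) = NN x + NN y - 2 * rp x y.
Proof. rewrite /NN rp_addl !rp_addr !rp_oppl !rp_oppr (rp_sym y x); ring. Qed.

Lemma NN_scale (r : R) x : NN (r%:C *: x) = r ^+ 2 * NN x.
Proof. rewrite /NN rp_scalel rp_scaler; ring. Qed.

Lemma CS x y : rp x y ^+ 2 <= NN x * NN y.
Proof.
have [Ny0|Nyn0] := eqVneq (NN y) 0.
  by rewrite (NN_eq0 Ny0) rp0r expr0n /= mulr_ge0 // NN_ge0.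
have Nyp : 0 < NN y by rewrite lt0r Nyn0 NN_ge0.
pose r := - rp x y / NN y.
have h := NN_ge0 (x + r%:C *: y).
rewrite NN_add NN_scale rp_scaler in h.
have e : (NN x + r ^+ 2 * NN y + 2 * (r * rp x y)) * NN y = NN x * NN y - rp x y ^+ 2.
  by rewrite /r; field.
by have := mulr_ge0 h (ltW Nyp); rewrite e subr_ge0.
Qed.

Lemma abs_rp x y : `|rp x y| <= hnorm x * hnorm y.
Proof.
rewrite -sqrtr_sqr !hnormE -sqrtrM ?NN_ge0 // ler_sqrt ?mulr_ge0 ?NN_ge0 //.
exact: CS.
Qed.

Lemma rp_le x y : rp x y <= hnorm x * hnorm y.
Proof. exact: le_trans (ler_norm _) (abs_rp x y). Qed.

Lemma hnorm_tri x y : hnorm (x + y) <= hnorm x + hnorm y.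
Proof.
rewrite -(ger0_norm (addr_ge0 (hnorm_ge0 x) (hnorm_ge0 y))) -sqrtr_sqr hnormE.
rewrite ler_sqrt ?sqr_ge0 // NN_add sqrrD !hnorm_sq.
have := rp_le x y; rewrite mulr2n; lra.
Qed.

End Hil.
Section Proj.
Variable R : realType.
Variable H : Hilb R.
Implicit Types x y z : H.

Lemma eps_n (e : R) : 0 < e -> exists N : nat, forall n, (N <= n)%N -> (n.+1%:R)^-1 < e.
Proof.
move=> e0; have := archi_boundP (ltW (eq_ind_r is_true e0 (invr_gt0 e))).
set N := Num.bound _ => hN; exists N => n Nn.
rewrite invf_plt ?posrE ?ltr0Sn //; apply: (lt_le_trans hN).
by rewrite ler_nat; apply: leq_trans Nn _.
Qed.

Lemma quad0 (k c : R) : 0 <= k -> (forall s, 2 * s * c <= s ^+ 2 * k) -> c = 0.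
Proof.
move=> k0 h; pose s := c / (k + 1).
have k1 : 0 < k + 1 by lra.
have := h s => hs.
have := ler_wpM2l (ltW (exprn_gt0 2 k1)) hs.
have -> : (k + 1) ^+ 2 * (2 * s * c) = 2 * c ^+ 2 * (k + 1).
  by rewrite /s; field; rewrite gt_eqF.
have -> : (k + 1) ^+ 2 * (s ^+ 2 * k) = c ^+ 2 * k.
  by rewrite /s; field; rewrite gt_eqF.
move=> hh; apply/eqP; rewrite -sqrf_eq0 eq_le sqr_ge0 andbT.
have c2 := sqr_ge0 c; nra.
Qed.

End Proj.
Section Proj2.
Variable R : realType.
Variable H : Hilb R.
Implicit Types x y z : H.

Lemma proj_ex (V : set H) x : closed_subspace V ->
  exists p, V p /\ forall v, V v -> hinner (x - p) v = 0.
Proof.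
case=> V0 Vlin Vcl.
have Vadd a b : V a -> V b -> V (a + b) by move=> ha hb; have := Vlin 1 a b ha hb; rewrite scale1r.
have Vsc c a : V a -> V (c *: a) by move=> ha; have := Vlin c a 0 ha V0; rewrite addr0.
pose D := [set r : R | exists v, V v /\ r = NN (x - v)].
have Dn : D !=set0 by exists (NN (x - 0)); exists 0.
have Dlb : has_lbound D by exists 0 => r [v [_ ->]]; exact: NN_ge0.
pose d := inf D.
have dle v : V v -> d <= NN (x - v) by move=> hv; apply: ge_inf Dlb _ _; exists v.
have d0 : 0 <= d.
  apply: lb_le_inf; first exact: Dn.
  by move=> r [v [_ ->]]; exact: NN_ge0.
have seq1 (n : nat) : exists v, V v /\ NN (x - v) < d + (n.+1%:R)^-1.
  have pn : 0 < (n.+1%:R : R)^-1 by rewrite invr_gt0 ltr0Sn.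
  have [r [v [hv ->]] hr] := inf_adherent pn (conj Dn Dlb).
  by exists v.
have [u Hu] := @choice _ _ _ seq1.
have Vu n : V (u n) by case: (Hu n).
have two : (2%:R : R) != 0 by rewrite pnatr_eq0.
have cb m n : NN (u m - u n) <= 2 * (m.+1%:R)^-1 + 2 * (n.+1%:R)^-1.
  pose mid := ((2%:R : R)^-1)%:C *: (u m + u n).
  have Vmid : V mid by apply: Vsc; apply: Vadd.
  have hmid := dle _ Vmid.
  have e1 : (x - u m) + (x - u n) = (2%:R : R)%:C *: (x - mid).
    rewrite /mid scalerBr scalerA -rmorphM mulfV // scale1r.
    rewrite rmorph_nat scaler_nat mulr2n.
    by rewrite opprD !addrA; congr (_ - _); rewrite addrAC.
  have e2 : (x - u m) - (x - u n) = u n - u m.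
    by rewrite opprB addrC addrA subrK.
  have par := NN_add (x - u m) (x - u n).
  have par2 := NN_sub (x - u m) (x - u n).
  rewrite e1 NN_scale in par; rewrite e2 in par2.
  have hm := (Hu m).2; have hn := (Hu n).2.
  have -> : u m - u n = - (u n - u m) by rewrite opprB.
  have -> : NN (- (u n - u m)) = NN (u n - u m).
    by rewrite /NN rp_oppl rp_oppr opprK.
  have h4 : (2%:R : R) ^+ 2 = 4%:R by rewrite expr2 -natrM.
  rewrite h4 in par.
  move: hm hn par par2 hmid; set a := (m.+1%:R : R)^-1; set b := (n.+1%:R : R)^-1; set q := rp _ _; set A := NN (x - u m); set B := NN (x - u n); set C := NN (x - mid); set E := NN (u n - u m).
  lra.
have cauchy : forall e : R, 0 < e -> exists N : nat, forall m n : nat,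
    (N <= m)%N -> (N <= n)%N ->
    Num.sqrt (complex.Re (hinner (u m - u n) (u m - u n))) < e.
  move=> e e0.
  have e2 : 0 < e ^+ 2 / 4%:R by rewrite divr_gt0 // exprn_gt0.
  have [N HN] := eps_n e2.
  exists N => m n Nm Nn; rewrite -hnormE -(ger0_norm (ltW e0)) -sqrtr_sqr hnormE.
  rewrite ltr_sqrt ?exprn_gt0 //.
  apply: (le_lt_trans (cb m n)).
  have := HN _ Nm; have := HN _ Nn; set a := (m.+1%:R : R)^-1; set b := (n.+1%:R : R)^-1; set E := e ^+ 2; lra.
have [l Hl] := hinner_complete cauchy.
have Vl : V l by apply: (Vcl u) => //.
have dl : NN (x - l) <= d.
  have sl : hnorm (x - l) <= Num.sqrt d.
    apply/ler_addgt0Pr => e e0.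
    have e2 : 0 < (e / 2%:R) ^+ 2 by rewrite exprn_gt0 // divr_gt0.
    have [N1 HN1] := eps_n e2.
    have [N2 HN2] := Hl (e / 2%:R) (divr_gt0 e0 (@ltr0Sn R 1)).
    pose n := maxn N1 N2.
    have h1 := HN1 n (leq_maxl _ _); have h2 := HN2 n (leq_maxr _ _).
    have -> : x - l = (x - u n) + (u n - l) by rewrite addrA subrK.
    apply: (le_trans (hnorm_tri _ _)).
    have h3 : hnorm (x - u n) < Num.sqrt d + e / 2%:R.
      rewrite -(ger0_norm (addr_ge0 (sqrtr_ge0 d) (ltW (divr_gt0 e0 (@ltr0Sn R 1))))).
      rewrite -sqrtr_sqr hnormE ltr_sqrt; last first.
        by rewrite exprn_gt0 // ltr_pwDr ?divr_gt0 ?sqrtr_ge0.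
      apply: (lt_le_trans (Hu n).2).
      rewrite sqrrD sqr_sqrtr //.
      have := mulr_ge0 (sqrtr_ge0 d) (ltW (divr_gt0 e0 (@ltr0Sn R 1))).
      move: h1; rewrite mulr2n; set q := e / 2%:R; set s := Num.sqrt d; set a := (n.+1%:R : R)^-1; lra.
    have h2' : hnorm (u n - l) < e / 2%:R by exact: h2.
    lra.
  rewrite -hnorm_sq -(sqr_sqrtr d0).
  by rewrite lerXn2r ?nnegrE ?hnorm_ge0 ?sqrtr_ge0.
have rz v : V v -> rp (x - l) v = 0.
  move=> hv; apply: (quad0 (NN_ge0 v)) => s.
  have hsv : V ((s%:C) *: v + l) by apply: Vlin.
  have := le_trans dl (dle _ hsv).
  have -> : x - (s%:C *: v + l) = (x - l) - s%:C *: v.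
    by rewrite opprD addrA addrAC.
  rewrite (NN_sub (x - l)) NN_scale rp_scaler; lra.
exists l; split => // v hv.
have h1 := rz v hv.
have h2 := rz _ (Vsc (Complex 0 1) v hv).
rewrite /rp ip_scaler in h1 h2.
move: h1 h2; rewrite [hinner _ v]ceta /= => -> h2.
by rewrite mul0r mulN1r opprK add0r in h2; rewrite h2.
Qed.
End Proj2.
Section Tens.
Variable R : realType.

Lemma orthproj_spec (H : Hilb R) (V : set H) x : closed_subspace V ->
  V (orthproj V x) /\ forall v, V v -> hinner (x - orthproj V x) v = 0.
Proof. move=> hV; exact: (epsilon_spec (inhabits (0:H)) _ (proj_ex x hV)). Qed.

Variables H K HK : Hilb R.
Variable t : H -> K -> HK.
Hypothesis Ht : is_tensor t.

Lemma tensor_NN f g : NN (t f g) = NN f * NN g.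
Proof. by rewrite /NN /rp Ht.1 !ip_xx /= mulr0 subr0. Qed.

Lemma tensor_hnorm f g : hnorm (t f g) = hnorm f * hnorm g.
Proof. by rewrite !hnormE tensor_NN sqrtrM // NN_ge0. Qed.

Lemma sum_orth (z : HK) (P : H -> K -> Prop) (s : seq (H * K)) :
  (forall a b, P a b -> hinner z (t a b) = 0) ->
  (forall p, p \in s -> P p.1 p.2) ->
  hinner z (\sum_(p <- s) t p.1 p.2) = 0.
Proof.
move=> hP; elim: s => [|q s IH] hs; first by rewrite big_nil ip0r.
rewrite big_cons ip_addr hP ?IH ?add0r //.
  by move=> p ps; apply: hs; rewrite inE ps orbT.
by apply: hs; rewrite inE eqxx.
Qed.

Lemma tensor_proj (V : set H) (W : set K) f g Pf Pg :
  V Pf -> (forall v, V v -> hinner (f - Pf) v = 0) ->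
  W Pg -> (forall w, W w -> hinner (g - Pg) w = 0) ->
  orthproj (tensor_subspace t V W) (t f g) = t Pf Pg.
Proof.
move=> VPf oPf WPg oPg.
set T := tensor_subspace t V W; set p := t Pf Pg.
have Tp : T p.
  move=> e e0; exists [:: (Pf, Pg)]; split.
    by move=> q; rewrite inE => /eqP -> /=.
  by rewrite big_cons big_nil addr0 subrr hnorm0.
have oel a b : V a /\ W b -> hinner (t f g - p) (t a b) = 0.
  case=> Va Wb; rewrite ip_subl !Ht.1.
  have : hinner f a = hinner Pf a by apply/eqP; rewrite -subr_eq0 -ip_subl oPf.
  have : hinner g b = hinner Pg b by apply/eqP; rewrite -subr_eq0 -ip_subl oPg.
  by move=> -> ->; rewrite subrr.
have orth y : T y -> hinner (t f g - p) y = 0.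
  move=> Ty; set z := t f g - p; set c := hinner z y.
  have key e : 0 < e -> complex.Re (conjc c * c) <= hnorm (conjc c *: z) * e.
    move=> e0; have [s [Hs Hn]] := Ty e e0.
    have hS := sum_orth (P := fun a b => V a /\ W b) oel Hs.
    have -> : conjc c * c = hinner (conjc c *: z) (y - \sum_(p <- s) t p.1 p.2).
      by rewrite ip_scalel ip_subr hS subr0.
    apply: (le_trans (rp_le _ _)).
    by apply: ler_wpM2l; [exact: hnorm_ge0 | exact: ltW].
  have : complex.Re (conjc c * c) <= 0.
    apply/ler_addgt0Pr => e e0; rewrite add0r.
    set M := hnorm (conjc c *: z).
    have M0 : 0 <= M by exact: hnorm_ge0.
    have M1 : 0 < M + 1 by lra.
    apply: (le_trans (key (e / (M + 1)) (divr_gt0 e0 M1))).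
    rewrite -/M mulrA ler_pdivrMr //; nra.
  rewrite [c]ceta /= => hc.
  have ha := sqr_ge0 (complex.Re c); have hb := sqr_ge0 (complex.Im c).
  have h0 : complex.Re c ^+ 2 + complex.Im c ^+ 2 <= 0.
    by move: hc; rewrite !expr2; lra.
  have : complex.Re c ^+ 2 = 0 by lra.
  have : complex.Im c ^+ 2 = 0 by lra.
  by move=> /eqP; rewrite sqrf_eq0 => /eqP -> /eqP; rewrite sqrf_eq0 => /eqP ->.
have ex : exists q, T q /\ forall y, T y -> hinner (t f g - q) y = 0.
  by exists p; split.
have [Tq oq] := epsilon_spec (inhabits (0 : HK)) _ ex.
rewrite /orthproj -/T.
set q := epsilon _ _ in Tq oq *.
apply/eqP; rewrite -subr_eq0; apply/eqP; apply: hinner_eq0.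
have d y : T y -> hinner (q - p) y = 0.
  move=> Ty.
  have -> : q - p = (t f g - p) - (t f g - q) by rewrite opprB [RHS]addrC addrA subrK.
  by rewrite ip_subl orth // oq // subrr.
by rewrite ip_subr !d // subrr.
Qed.

End Tens.
Section ES.
Variable R : realType.
Local Open Scope ereal_scope.

Lemma term_le (T : choiceType) (I : set T) (F : T -> \bar R) i :
  (forall j, I j -> 0 <= F j) -> I i -> F i <= \esum_(j in I) F j.
Proof.
move=> F0 Ii; apply: esum_ge; exists [set i].
  by split; [exact: finite_set1 | move=> j ->].
by rewrite fsbig_set1.
Qed.

Lemma esumZr (T : choiceType) (I : set T) (a : T -> \bar R) (r : R) :
  (0 <= r)%R -> (forall i, 0 <= a i) ->
  \esum_(i in I) (a i * r%:E) = (\esum_(i in I) a i) * r%:E.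
Proof.
move=> r0 a0; rewrite muleC /esum -ereal_supZl //; last first.
  by apply/set0P; exists 0; exists set0; [exact: fsets_set0 | rewrite fsbig_set0].
have dis A : fsets I A -> \sum_(i \in A) (a i * r%:E) = r%:E * \sum_(i \in A) a i.
  by case=> finA _; rewrite !fsbig_finite //= muleC ge0_sume_distrl.
congr ereal_sup; apply/seteqP; split => x /=.
  by move=> [A hA <-]; exists (\sum_(i \in A) a i); [exists A | rewrite dis].
by move=> [y [A hA <-] <-]; exists A => //; rewrite dis.
Qed.

Lemma esum_prod (T1 T2 : choiceType) (I : set T1) (J : set T2) (a : T1 -> R) (b : T2 -> R) :
  (forall i, 0 <= a i)%R -> (forall j, 0 <= b j)%R ->
  \esum_(k in I `*` J) (a k.1 * b k.2)%:E =
  (\esum_(i in I) (a i)%:E) * (\esum_(j in J) (b j)%:E).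
Proof.
move=> a0 b0.
rewrite -(@esum_esum R T1 T2 I (fun _ => J) (fun i j => (a i * b j)%:E)); last first.
  by move=> i j _ _; rewrite lee_fin mulr_ge0.
have inner i : \esum_(j in J) (a i * b j)%:E = (\esum_(j in J) (b j)%:E) * (a i)%:E.
  rewrite -esumZr //; apply: eq_esum => j _; by rewrite -EFinM mulrC.
under eq_esum do rewrite inner.
have S2ge0 : 0 <= \esum_(j in J) (b j)%:E by apply: esum_ge0 => j _; rewrite lee_fin.
have S1ge0 : 0 <= \esum_(i in I) (a i)%:E by apply: esum_ge0 => i _; rewrite lee_fin.
move: S2ge0; case: (\esum_(j in J) (b j)%:E) => [s| |] // s0.
  rewrite lee_fin in s0.
  rewrite -esumZr //; by apply: eq_esum => i _; rewrite muleC.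
case: (pselect (exists i, I i /\ (0 < a i)%R)) => [[i [Ii ai]] | nex].
  have S1p : 0 < \esum_(i in I) (a i)%:E.
    by apply: (lt_le_trans _ (term_le _ Ii)); rewrite ?lte_fin // => j _; rewrite lee_fin.
  rewrite muleC gt0_mulye //.
  apply/eqP; rewrite eq_le leey /=.
  have h := @term_le _ I (fun i => +oo * (a i)%:E) i _ Ii.
  rewrite gt0_mulye ?lte_fin // in h; apply: h => j _.
  by rewrite mule_ge0 // lee_fin.
have az i : I i -> a i = 0%R.
  move=> Ii; apply/eqP; rewrite eq_le a0 andbT leNgt; apply/negP => h.
  by apply: nex; exists i.
rewrite esum1; last by move=> i Ii; rewrite az // mule0.
by rewrite esum1 ?mul0e // => i Ii; rewrite az.
Qed.

End ES.
Section FrameAlg.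
Variable R : realType.
Local Open Scope ereal_scope.

Lemma one_side (X : Type) (s : X -> \bar R) (n : X -> R) (c m A B : R) :
  (0 < c)%R -> (0 < m)%R -> (0 < A)%R -> (A <= B)%R -> (forall f, 0 <= s f) ->
  (forall f, (A * (n f * m))%:E <= s f * c%:E /\ s f * c%:E <= (B * (n f * m))%:E) ->
  exists A1 B1 : R, [/\ (0 < A1)%R, (A1 <= B1)%R &
    forall f, (A1 * n f)%:E <= s f /\ s f <= (B1 * n f)%:E].
Proof.
move=> c0 m0 A0 AB s0 h.
exists (A * m / c)%R, (B * m / c)%R; split.
- by rewrite divr_gt0 // mulr_gt0.
- by rewrite ler_pM2r ?invr_gt0 // ler_pM2r.
move=> f; have [lo hi] := h f; move: (s0 f) lo hi.
case: (s f) => [r| |] //.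
  rewrite -!EFinM !lee_fin => r0 lo hi; split.
    have -> : (A * m / c * n f = (A * (n f * m)) / c)%R by ring.
    by rewrite ler_pdivrMr.
  have -> : (B * m / c * n f = (B * (n f * m)) / c)%R by ring.
  by rewrite ler_pdivlMr.
by move=> _ _; rewrite gt0_mulye ?lte_fin.
Qed.

Lemma frame_equiv (X Y : Type) (s1 : X -> \bar R) (s2 : Y -> \bar R)
    (n1 : X -> R) (n2 : Y -> R) :
  (forall f, 0 <= s1 f) -> (forall g, 0 <= s2 g) ->
  (forall f, 0 <= n1 f)%R -> (forall g, 0 <= n2 g)%R ->
  (exists f, 0 < n1 f)%R -> (exists g, 0 < n2 g)%R ->
  ((exists A B : R, [/\ (0 < A)%R, (A <= B)%R &
      forall f, (A * n1 f)%:E <= s1 f /\ s1 f <= (B * n1 f)%:E]) /\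
   (exists A B : R, [/\ (0 < A)%R, (A <= B)%R &
      forall g, (A * n2 g)%:E <= s2 g /\ s2 g <= (B * n2 g)%:E]))
  <->
  (exists A B : R, [/\ (0 < A)%R, (A <= B)%R &
      forall f g, (A * (n1 f * n2 g))%:E <= s1 f * s2 g /\
                  s1 f * s2 g <= (B * (n1 f * n2 g))%:E]).
Proof.
move=> s1g s2g n1g n2g [f0 f0p] [g0 g0p]; split.
  move=> [[A1 [B1 [A1p AB1 h1]]] [A2 [B2 [A2p AB2 h2]]]].
  exists (A1 * A2)%R, (B1 * B2)%R; split.
  - exact: mulr_gt0.
  - by apply: ler_pM => //; apply: ltW.
  move=> f g; have [l1 u1] := h1 f; have [l2 u2] := h2 g.
  move: (s1g f) (s2g g) l1 u1 l2 u2.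
  case: (s1 f) => [r1| |] //. 
  case: (s2 g) => [r2| |] //. 
  rewrite -!EFinM !lee_fin => r10 r20 l1 u1 l2 u2; split.
    rewrite mulrACA; apply: ler_pM => //; apply: mulr_ge0 => //; exact: ltW.
  rewrite mulrACA; exact: ler_pM.
move=> [A [B [Ap AB h]]].
have P0 : (0 < A * (n1 f0 * n2 g0))%R by rewrite !mulr_gt0.
have [l0 u0] := h f0 g0.
move: (s1g f0) (s2g g0) l0 u0.
case E1: (s1 f0) => [c1| |] //; case E2: (s2 g0) => [c2| |] //.
- rewrite -EFinM !lee_fin => c10 c20 l0 u0.
  have pc : (0 < c1 * c2)%R by exact: lt_le_trans P0 l0.
  have c1p : (0 < c1)%R.
    rewrite lt0r c10 andbT; apply/eqP => e; move: pc; by rewrite e mul0r ltxx.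
  have c2p : (0 < c2)%R.
    rewrite lt0r c20 andbT; apply/eqP => e; move: pc; by rewrite e mulr0 ltxx.
  split.
    apply: (one_side c2p g0p Ap AB s1g) => f.
    by rewrite -E2; exact: h.
  apply: (one_side c1p f0p Ap AB s2g) => g.
  by rewrite muleC -E1 (mulrC (n2 g)); exact: h.
- rewrite lee_fin le_eqVlt => /orP[/eqP <-|c1p] _; first by rewrite mul0e lee_fin leNgt P0.
  by move=> _; rewrite muleC gt0_mulye ?lte_fin.
- move=> _; rewrite lee_fin le_eqVlt => /orP[/eqP <-|c2p]; first by rewrite mule0 lee_fin leNgt P0.
  by move=> _; rewrite gt0_mulye ?lte_fin.
Qed.

End FrameAlg.
Theorem theorem3p4 (R : realType)
  (H K HK : Hilb R) (t : H -> K -> HK)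
  (I J : set int)
  (Hi Kj : int -> Hilb R) (HKij : int -> int -> Hilb R)
  (tij : forall i j, Hi i -> Kj j -> HKij i j)
  (V : int -> set H) (W : int -> set K)
  (Lam : forall i, {linear H -> Hi i}) (Gam : forall j, {linear K -> Kj j})
  (LG : forall i j, {linear HK -> HKij i j})
  (v w : int -> R) :
  separable H -> separable K ->
  (exists f : H, f != 0) -> (exists g : K, g != 0) ->
  is_tensor t ->
  (forall i j, I i -> J j -> is_tensor (tij i j)) ->
  (forall i, I i -> closed_subspace (V i)) ->
  (forall j, J j -> closed_subspace (W j)) ->
  (forall i, I i -> bounded_op (Lam i)) ->
  (forall j, J j -> bounded_op (Gam j)) ->
  (forall i j, I i -> J j -> is_tensor_op t (tij i j) (Lam i) (Gam j) (LG i j)) ->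
  (forall i, I i -> 0 < v i) ->
  (forall j, J j -> 0 < w j) ->
  (gfusion_frame I V Lam v /\ gfusion_frame J W Gam w) <->
  tensor_gfusion_frame t I J V W LG v w.
Proof.
move=> _ _ [f0 f0n] [g0 g0n] Ht Htij Vcl Wcl _ _ HLG _ _.
pose a (f : H) i := (v i ^+ 2 * hnorm (Lam i (orthproj (V i) f)) ^+ 2)%R.
pose b (g : K) j := (w j ^+ 2 * hnorm (Gam j (orthproj (W j) g)) ^+ 2)%R.
have a0 f i : (0 <= a f i)%R by rewrite mulr_ge0 // sqr_ge0.
have b0 g j : (0 <= b g j)%R by rewrite mulr_ge0 // sqr_ge0.
have key f g :
  (\esum_(ij in I `*` J)
    ((v ij.1 * w ij.2) ^+ 2 *
     hnorm (LG ij.1 ij.2 (orthproj (tensor_subspace t (V ij.1) (W ij.2)) (t f g))) ^+ 2)%:E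
  = (\esum_(i in I) (a f i)%:E) * (\esum_(j in J) (b g j)%:E))%E.
  rewrite -esum_prod //; apply: eq_esum => -[i j] [/= Ii Jj].
  have [VP oP] := orthproj_spec f (Vcl i Ii).
  have [WP oQ] := orthproj_spec g (Wcl j Jj).
  rewrite (tensor_proj Ht VP oP WP oQ) (HLG i j Ii Jj).2 (tensor_hnorm (Htij i j Ii Jj)).
  by rewrite /a /b; congr (_%:E); rewrite !exprMn; ring.
have tn f g : (hnorm (t f g) ^+ 2 = hnorm f ^+ 2 * hnorm g ^+ 2)%R.
  by rewrite (tensor_hnorm Ht) exprMn.
have pos (X : Hilb R) (x : X) : x != 0 -> (0 < hnorm x ^+ 2)%R.
  move=> xn; rewrite hnorm_sq lt0r NN_ge0 andbT; apply/eqP => e.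
  by move: xn; rewrite (NN_eq0 e) eqxx.
have s1g f : (0 <= \esum_(i in I) (a f i)%:E)%E by apply: esum_ge0 => i _; rewrite lee_fin.
have s2g g : (0 <= \esum_(j in J) (b g j)%:E)%E by apply: esum_ge0 => j _; rewrite lee_fin.
have eqv := @frame_equiv R H K (fun f => \esum_(i in I) (a f i)%:E)%E
  (fun g => \esum_(j in J) (b g j)%:E)%E (fun f => hnorm f ^+ 2)%R (fun g => hnorm g ^+ 2)%R
  s1g s2g
  (fun f => sqr_ge0 _) (fun g => sqr_ge0 _) (ex_intro _ f0 (pos _ _ f0n))
  (ex_intro _ g0 (pos _ _ g0n)).
split.
  move/eqv => [A [B [Ap AB h]]]; exists A, B; split => // f g.
  by rewrite key tn; exact: h.
move=> [A [B [Ap AB h]]]; apply/eqv; exists A, B; split => // f g.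
by rewrite -key -tn; exact: h.
Qed.
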